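(* Let $M,X$ be metric spaces with $\#M\ge3$ and $r:=d_{GH}(M,X)<s(M)/2$. Let $d$ be a real number with $r<d\le s(M)/2$. Then: (1) there exists a correspondence $R\in\mathcal{R}(M,X)$ with $\operatorname{dis}R<2d\le s(M)$; (2) for each such $R$, the family $D_R=\{X_i:=R(i)\}_{i\in M}$ is a partition of $X$ (the sets $X_i$ are nonempty, pairwise disjoint and cover $X$); (3) for all $i,j\in M$ (possibly equal) and all $x_i\in X_i$, $x_j\in X_j$, one has $||x_ix_j|-|ij||<2d\le s(M)$; (4) $\operatorname{diam}X_i<2d\le s(M)$ for all $i\in M$; (5) if $d\le s(M)/4$, then the partition $D_R$ is uniquely determined: if $R'\in\mathcal{R}(M,X)$ also satisfies $\operatorname{dis}R'<2d$, then $D_{R'}=D_R$; (6) if $d\le\min\{s(M)/4,e(M)/4\}$, then the correspondence $R\in\mathcal{R}(M,X)$ with $\operatorname{dis}R<2d$ is unique; consequently $R$ is optimal, $\operatorname{dis}R=2d_{GH}(M,X)$, $\operatorname{diam}X_i\le\operatorname{dis}R$ for all $i$, and $||x_ix_j|-|ij||\le\operatorname{dis}R$ for all $i\ne j$, $x_i\in X_i$, $x_j\in X_j$.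
   Context: For sets $X,Y$, a correspondence is a relation $R\subset X\times Y$ whose projections to $X$ and $Y$ are both surjective; $\mathcal{R}(X,Y)$ is the set of correspondences, and $R(x)=\{y:(x,y)\in R\}$. For metric spaces, the distortion is $\operatorname{dis}R=\sup\{||xx'|-|yy'||:(x,y),(x',y')\in R\}$, and the Gromov–Hausdorff distance satisfies $d_{GH}(X,Y)=\frac12\inf\{\operatorname{dis}R: R\in\mathcal{R}(X,Y)\}$; $R$ is optimal if $\operatorname{dis}R=2d_{GH}(X,Y)$. For a metric space $M$ with $\#M\ge3$: $s(M)=\inf\{|xx'|: x\ne x'\}$; $S(M)$ is the set of bijections $M\to M$ and $e(M)=\inf\{\operatorname{dis}f: f\in S(M), f\ne\mathrm{id}\}$, where $\operatorname{dis}f=\sup_{x,x'}||xx'|-|f(x)f(x')||$ (the distortion of the graph of $f$). *)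

(* Defs.v *)
From HB Require Import structures.
From mathcomp Require Import all_boot all_order all_algebra.
From mathcomp Require Import all_classical all_reals.
From mathcomp Require Import ereal.
Set Implicit Arguments. Unset Strict Implicit. Unset Printing Implicit Defensive.
Import Order.TTheory GRing.Theory Num.Theory.
Local Open Scope classical_set_scope.
Local Open Scope ring_scope.

Section GH.
Variable R : realType.

Definition is_metric (T : Type) (d : T -> T -> R) : Prop :=
  (forall x y, 0 <= d x y) /\
  (forall x y, d x y = 0 <-> x = y) /\
  (forall x y, d x y = d y x) /\
  (forall x y z, d x z <= d x y + d y z).

(* correspondence: relation C ⊂ X × Y whose projections are surjective;
   C x is the set C(x) = {y | (x,y) ∈ C} *)
Definition correspondence (X Y : Type) (C : X -> set Y) : Prop :=
  (forall x, exists y, C x y) /\ (forall y, exists x, C x y).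

Definition dis (X Y : Type) (dX : X -> X -> R) (dY : Y -> Y -> R)
    (C : X -> set Y) : \bar R :=
  ereal_sup [set t | exists x y x' y',
     C x y /\ C x' y' /\ t = (`| dX x x' - dY y y' |)%:E].

Definition dGH (X Y : Type) (dX : X -> X -> R) (dY : Y -> Y -> R) : \bar R :=
  ((2^-1)%:E * ereal_inf [set dis dX dY C | C in [set C | correspondence C]])%E.

Definition sM (M : Type) (dM : M -> M -> R) : \bar R :=
  ereal_inf [set t | exists x x', x <> x' /\ t = (dM x x')%:E].

Definition graph (X Y : Type) (f : X -> Y) : X -> set Y := fun x y => f x = y.

Definition eM (M : Type) (dM : M -> M -> R) : \bar R :=
  ereal_inf [set dis dM dM (graph f) | f in [set f : M -> M | bijective f /\ f <> id]].

Definition diam (X : Type) (dX : X -> X -> R) (A : set X) : \bar R :=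
  ereal_sup [set t | exists x y, A x /\ A y /\ t = (dX x y)%:E].

End GH.

(* Main.v *)
Require Import Defs.
From HB Require Import structures.
From mathcomp Require Import all_boot all_order all_algebra.
From mathcomp Require Import all_classical all_reals.
From mathcomp Require Import ereal lra.
Import Order.TTheory GRing.Theory Num.Theory.
Local Open Scope classical_set_scope.
Local Open Scope ring_scope.
Set Implicit Arguments. Unset Strict Implicit.

Lemma dis_ge (R : realType) (X Y : Type) (dX : X -> X -> R) (dY : Y -> Y -> R)
  (C : X -> set Y) x y x' y' : C x y -> C x' y' ->
  ((`| dX x x' - dY y y'|)%:E <= dis dX dY C)%E.
Proof. by move=> h h'; apply: ereal_sup_ubound; exists x, y, x', y'. Qed.

Lemma dis_le (R : realType) (X Y : Type) (dX : X -> X -> R) (dY : Y -> Y -> R)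
  (C : X -> set Y) (e : \bar R) :
  (forall x y x' y', C x y -> C x' y' -> ((`| dX x x' - dY y y'|)%:E <= e)%E) ->
  (dis dX dY C <= e)%E.
Proof. by move=> h; apply: ge_ereal_sup => t [x [y [x' [y' [? [? ->]]]]]]; apply: h. Qed.

Lemma sM_le (R : realType) (M : Type) (dM : M -> M -> R) x x' :
  x <> x' -> (sM dM <= (dM x x')%:E)%E.
Proof. by move=> h; apply: ereal_inf_lbound; exists x, x'. Qed.

Lemma ediv_le (R : realType) (e : \bar R) (k d : R) : 0 < k ->
  (d%:E <= e * (k^-1)%:E)%E -> ((k * d)%:E <= e)%E.
Proof.
move=> k0; case: e => [r| |] /=.
- rewrite -EFinM !lee_fin => h.
  by rewrite -(ler_pM2l k0) mulrCA divff ?gt_eqF // mulr1 in h.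
- by move=> _; apply: leey.
- move=> h. rewrite mulNyr (gtr0_sg (x:=k^-1)) ?invr_gt0 // mul1e in h.
  by rewrite leeNy_eq in h.
Qed.

Lemma term_lt (R : realType) (M X : Type) (dM : M -> M -> R) (dX : X -> X -> R)
  (C : M -> set X) e i j xi xj : C i xi -> C j xj -> (dis dM dX C < e%:E)%E ->
  `|dM i j - dX xi xj| < e.
Proof. by move=> h1 h2 h; rewrite -lte_fin; apply: le_lt_trans h; apply: dis_ge. Qed.

Lemma disjointC (R : realType) (M X : Type) (dM : M -> M -> R) (dX : X -> X -> R)
  (hM : is_metric dM) (hX : is_metric dX) (C : M -> set X) e :
  (e%:E <= sM dM)%E -> (dis dM dX C < e%:E)%E ->
  forall i j x, C i x -> C j x -> i = j.
Proof.
case: hM => [dM0 [dMeq _]]; case: hX => [_ [dXeq _]].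
move=> hs hd i j x hi hj; apply: contrapT => nij.
have := term_lt hi hj hd; rewrite (proj2 (dXeq x x) erefl) subr0 ger0_norm //.
have := le_trans hs (sM_le dM nij); rewrite lee_fin => h1 h2.
by have := le_lt_trans h1 h2; rewrite ltxx.
Qed.

Lemma diam_le (R : realType) (M X : Type) (dM : M -> M -> R) (dX : X -> X -> R)
  (hM : is_metric dM) (hX : is_metric dX) (C : M -> set X) i :
  (diam dX (C i) <= dis dM dX C)%E.
Proof.
case: hM => [dM0 [dMeq _]]; case: hX => [dX0 _].
apply: ge_ereal_sup => t [x [y [hx [hy ->]]]].
have := dis_ge dM dX hx hy.
by rewrite (proj2 (dMeq i i) erefl) sub0r normrN ger0_norm.
Qed.

Lemma block_sub (R : realType) (M X : Type) (dM : M -> M -> R) (dX : X -> X -> R)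
  (hM : is_metric dM) (hX : is_metric dX) (C1 C2 : M -> set X) d :
  ((4 * d)%:E <= sM dM)%E ->
  correspondence C1 -> (dis dM dX C1 < (2 * d)%:E)%E ->
  correspondence C2 -> (dis dM dX C2 < (2 * d)%:E)%E ->
  forall i j x y, C1 i x -> C2 j x -> C2 j y -> C1 i y.
Proof.
move=> hs [_ cov1] hd1 _ hd2 i j x y h1 h2 h3.
have [k hk] := cov1 y.
suff -> : i = k by [].
apply: contrapT => nik.
have := le_trans hs (sM_le dM nik); rewrite lee_fin => hik.
have := term_lt h1 hk hd1; have := term_lt h2 h3 hd2.
case: hM => [dM0 [dMeq _]]; rewrite (proj2 (dMeq j j) erefl).
rewrite !ltr_norml => /andP[a1 a2] /andP[b1 b2].
move: a1 a2 b1 b2 hik; clear; lra.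
Qed.

Lemma block_eq (R : realType) (M X : Type) (dM : M -> M -> R) (dX : X -> X -> R)
  (hM : is_metric dM) (hX : is_metric dX) (C1 C2 : M -> set X) d :
  ((4 * d)%:E <= sM dM)%E ->
  correspondence C1 -> (dis dM dX C1 < (2 * d)%:E)%E ->
  correspondence C2 -> (dis dM dX C2 < (2 * d)%:E)%E ->
  forall i j x, C1 i x -> C2 j x -> C2 j = C1 i.
Proof.
move=> hs c1 hd1 c2 hd2 i j x h1 h2.
apply/funext => y; apply/propext; split.
- exact: (block_sub hM hX hs c1 hd1 c2 hd2 h1 h2).
- exact: (block_sub hM hX hs c2 hd2 c1 hd1 h2 h1).
Qed.

Unset Implicit Arguments.

Theorem mainTheorem15 (R : realType) (M X : Type)
    (dM : M -> M -> R) (dX : X -> X -> R)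
    (hM : is_metric dM) (hX : is_metric dX)
    (h3 : exists a b c : M, a <> b /\ b <> c /\ a <> c)
    (hr : (dGH dM dX < sM dM * (2^-1)%:E)%E)
    (d : R)
    (hrd : (dGH dM dX < d%:E)%E)
    (hds : (d%:E <= sM dM * (2^-1)%:E)%E) :
  (* (1) *)
  (exists C : M -> set X, correspondence C /\
      (dis dM dX C < (2 * d)%:E)%E /\ ((2 * d)%:E <= sM dM)%E) /\
  (forall C : M -> set X, correspondence C -> (dis dM dX C < (2 * d)%:E)%E ->
    (* (2) D_C = {C i}_i is a partition of X *)
    ((forall i, exists x, C i x) /\
     (forall i j x, C i x -> C j x -> i = j) /\
     (forall x, exists i, C i x)) /\
    (* (3) *)
    (forall i j xi xj, C i xi -> C j xj ->
       `| dX xi xj - dM i j | < 2 * d /\ ((2 * d)%:E <= sM dM)%E) /\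
    (* (4) *)
    (forall i, (diam dX (C i) < (2 * d)%:E)%E /\ ((2 * d)%:E <= sM dM)%E) /\
    (* (5) *)
    ((d%:E <= sM dM * (4^-1)%:E)%E ->
       forall C' : M -> set X, correspondence C' ->
         (dis dM dX C' < (2 * d)%:E)%E -> range C' = range C) /\
    (* (6) *)
    ((d%:E <= sM dM * (4^-1)%:E)%E -> (d%:E <= eM dM * (4^-1)%:E)%E ->
       (forall C' : M -> set X, correspondence C' ->
          (dis dM dX C' < (2 * d)%:E)%E -> C' = C) /\
       dis dM dX C = (2%:E * dGH dM dX)%E /\
       (forall i, (diam dX (C i) <= dis dM dX C)%E) /\
       (forall i j xi xj, i <> j -> C i xi -> C j xj ->
          ((`| dX xi xj - dM i j |)%:E <= dis dM dX C)%E))).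
Proof.
have h2s : ((2 * d)%:E <= sM dM)%E by apply: ediv_le.
split.
  have : (ereal_inf [set dis dM dX C | C in [set C | correspondence C]]
            < (2 * d)%:E)%E.
    rewrite ltNge; apply/negP => hle.
    have : (d%:E <= dGH dM dX)%E.
      have -> : d = 2^-1 * (2 * d) by rewrite mulrA mulVf // mul1r.
      rewrite EFinM /dGH; apply: lee_wpmul2l => //; rewrite lee_fin invr_ge0 //.
    by rewrite leNgt hrd.
  move=> /ereal_inf_lt [y [C hC <-] hy].
  by exists C.
move=> C hC hd.
have disj := disjointC hM hX h2s hd.
have hdiam : forall i, (diam dX (C i) < (2 * d)%:E)%E.
  by move=> i; apply: le_lt_trans hd; apply: diam_le.
split; first by split; [apply hC | split; [exact: disj | apply hC]].
split.
  move=> i j xi xj hi hj; split => //.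
  by rewrite distrC; apply: term_lt hd.
split; first by move=> i; split.
have rng : ((d%:E <= sM dM * (4^-1)%:E)%E ->
       forall C' : M -> set X, correspondence C' ->
         (dis dM dX C' < (2 * d)%:E)%E -> range C' = range C).
  move=> h4 C' hC' hd'; have h4s : ((4 * d)%:E <= sM dM)%E by apply: ediv_le.
  apply/seteqP; split => S [j _ <-].
  - have [x hx] := hC'.1 j; have [i hi] := hC.2 x.
    by exists i => //; apply/esym; apply: (block_eq hM hX h4s hC hd hC' hd' hi hx).
  - have [x hx] := hC.1 j; have [i hi] := hC'.2 x.
    by exists i => //; apply/esym; apply: (block_eq hM hX h4s hC' hd' hC hd hi hx).
split; first exact: rng.
move=> h4 h4e.
have h4s : ((4 * d)%:E <= sM dM)%E by apply: ediv_le.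
have h4es : ((4 * d)%:E <= eM dM)%E by apply: ediv_le.
have uniq : forall C' : M -> set X, correspondence C' ->
          (dis dM dX C' < (2 * d)%:E)%E -> C' = C.
  move=> C' hC' hd'.
  have disj' := disjointC hM hX h2s hd'.
  have exf : forall j, exists i, C' j = C i.
    move=> j; have [x hx] := hC'.1 j; have [i hi] := hC.2 x.
    by exists i; apply: (block_eq hM hX h4s hC hd hC' hd' hi hx).
  have exg : forall i, exists j, C i = C' j.
    move=> i; have [x hx] := hC.1 i; have [j hj] := hC'.2 x.
    by exists j; apply: (block_eq hM hX h4s hC' hd' hC hd hj hx).
  pose f j := projT1 (cid (exf j)).
  pose g i := projT1 (cid (exg i)).
  have hf : forall j, C' j = C (f j) by move=> j; rewrite /f; case: cid.
  have hg : forall i, C i = C' (g i) by move=> i; rewrite /g; case: cid.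
  have injC : forall a b, C a = C b -> a = b.
    by move=> a b e; have [x hx] := hC.1 a; apply: (disj a b x) => //; rewrite -e.
  have injC' : forall a b, C' a = C' b -> a = b.
    by move=> a b e; have [x hx] := hC'.1 a; apply: (disj' a b x) => //; rewrite -e.
  have bf : bijective f.
    exists g => [j|i]; first by apply: injC'; rewrite -hg -hf.
    by apply: injC; rewrite -hf -hg.
  have fid : f = id.
    apply: contrapT => nf.
    have h1 : (eM dM <= dis dM dM (graph f))%E.
      by apply: ereal_inf_lbound; exists f.
    have h2 : (dis dM dM (graph f) <= dis dM dX C' + dis dM dX C)%E.
      apply: dis_le => j y j' y' <- <-.
      have [x hx] := hC'.1 j; have [x' hx'] := hC'.1 j'.
      have e1 := dis_ge dM dX hx hx'.
      rewrite hf in hx; rewrite hf in hx'.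
      have e2 := dis_ge dM dX hx hx'.
      apply: le_trans (leeD e1 e2); rewrite -EFinD lee_fin.
      by rewrite (distrC (dM (f j) (f j'))); apply: ler_distD.
    have h3' : (dis dM dX C' + dis dM dX C < (4 * d)%:E)%E.
      have -> : 4 * d = 2 * d + 2 * d by lra.
      by rewrite EFinD; apply: lteD.
    have := le_lt_trans (le_trans h4es (le_trans h1 h2)) h3'.
    by rewrite ltxx.
  by apply/funext => j; rewrite hf fid.
split; first exact: uniq.
split.
  have hinf : ereal_inf [set dis dM dX C | C in [set C | correspondence C]]
              = dis dM dX C.
    apply/le_anti/andP; split.
      by apply: ereal_inf_lbound; exists C.
    apply: le_ereal_inf_tmp => t [C'' hC'' <-].
    case: (ltP (dis dM dX C'') ((2 * d)%:E)) => h.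
      by rewrite (uniq C'' hC'' h).
    exact: le_trans (ltW hd) h.
  rewrite /dGH hinf muleA -EFinM mulfV // mul1e.
  by [].
split; first by move=> i; apply: diam_le.
move=> i j xi xj _ hi hj.
by rewrite distrC; apply: dis_ge.
Qed.
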